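(* For every $d\geq 3$, \[ \mathscr{A}(\otimes_{j=1}^d\mathbb{R}^4)=\frac{1}{\sqrt{4^{d-1}}}<\mathscr{A}(\mathrm{Sym}^d(\mathbb{R}^4)) \qquad\text{and}\qquad \mathscr{A}(\otimes_{j=1}^d\mathbb{R}^8)=\frac{1}{\sqrt{8^{d-1}}}<\mathscr{A}(\mathrm{Sym}^d(\mathbb{R}^8)). \]
   Context: Norms on real $n^d$-tensors: \begin{itemize} \item The Frobenius norm is $\|A\|_F=(\sum a_{i_1\dots i_d}^2)^{1/2}$. \item The spectral norm is $\|A\|_2=\max_{\|x^{(j)}\|=1}\sum a_{i_1\dots i_d}x^{(1)}_{i_1}\cdots x^{(d)}_{i_d}$. \end{itemize} For a linear subspace $V$ (the full tensor space $\otimes_{j=1}^d\mathbb{R}^n$ or the space $\mathrm{Sym}^d(\mathbb{R}^n)$ of symmetric tensors), the best rank-one approximation ratio is $\mathscr{A}(V)=\min_{0\neq A\in V}\|A\|_2/\|A\|_F$. *)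

(* Defs.v *)
From Stdlib Require Import Reals List Permutation.
Import ListNotations.
Open Scope R_scope.

(* A real n^d-tensor is represented by its entries A [i_1; ...; i_d],
   indices are lists of naturals of length d with entries < n.
   Only the values on valid indices matter. *)
Definition tensor := list nat -> R.

Fixpoint indices (n d : nat) : list (list nat) :=
  match d with
  | O => [ [] ]
  | S d' => flat_map (fun i => map (cons i) (indices n d')) (seq 0 n)
  end.

Definition lsum (l : list R) : R := fold_right Rplus 0 l.

Definition frob (n d : nat) (A : tensor) : R :=
  sqrt (lsum (map (fun idx => A idx ^ 2) (indices n d))).

(* A family of d vectors in R^n: x j i is the i-th coordinate of x^(j+1). *)
Definition vecs := nat -> nat -> R.

Fixpoint prodx (x : vecs) (j : nat) (idx : list nat) : R :=
  match idx with
  | [] => 1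
  | i :: r => x j i * prodx x (S j) r
  end.

Definition mform (n d : nat) (A : tensor) (x : vecs) : R :=
  lsum (map (fun idx => A idx * prodx x 0 idx) (indices n d)).

Definition unit_vecs (n d : nat) (x : vecs) : Prop :=
  forall j, (j < d)%nat -> sqrt (lsum (map (fun i => x j i ^ 2) (seq 0 n))) = 1.

Definition is_spectral_norm (n d : nat) (A : tensor) (s : R) : Prop :=
  (exists x, unit_vecs n d x /\ mform n d A x = s) /\
  (forall x, unit_vecs n d x -> mform n d A x <= s).

Definition nonzero (n d : nat) (A : tensor) : Prop :=
  exists idx, In idx (indices n d) /\ A idx <> 0.

Definition is_symmetric (n d : nat) (A : tensor) : Prop :=
  forall idx idx', In idx (indices n d) -> Permutation idx idx' -> A idx = A idx'.

Definition full_space (n d : nat) (A : tensor) : Prop := True.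

Definition is_approx_ratio (V : nat -> nat -> tensor -> Prop) (n d : nat) (r : R) : Prop :=
  (exists A s, V n d A /\ nonzero n d A /\ is_spectral_norm n d A s /\ s / frob n d A = r) /\
  (forall A s, V n d A -> nonzero n d A -> is_spectral_norm n d A s -> r <= s / frob n d A).

(* Main.v *)
Require Import Defs.
From Stdlib Require Import Reals List Permutation.
Module MC.
From HB Require Import structures.
From mathcomp Require Import all_boot all_order all_algebra.
From mathcomp Require Import classical_sets boolp filter topology normedtype matrix_normedtype derive Rstruct Rstruct_topology.
Import Order.TTheory GRing.Theory Num.Theory.
Local Open Scope classical_set_scope.
Local Open Scope ring_scope.

Lemma evt_min (N : nat) (P : (nat -> R) -> Prop) (f : (nat -> R) -> R) (B : R) :
  (exists y, P y) ->
  (forall y, P y -> forall k, lt k N -> Rle (Rabs (y k)) B) ->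
  (forall y, (forall eps, Rlt 0 eps -> exists z, P z /\ forall k, lt k N -> Rlt (Rabs (Rminus (y k) (z k))) eps) -> P y) ->
  (forall y, P y -> forall eps, Rlt 0 eps -> exists delta, Rlt 0 delta /\
      forall z, P z -> (forall k, lt k N -> Rlt (Rabs (Rminus (y k) (z k))) delta) -> Rlt (Rabs (Rminus (f y) (f z))) eps) ->
  exists y, P y /\ forall z, P z -> Rle (f y) (f z).
Proof.
move=> [y0 Py0] Hb Hcl Hct.
pose tof (v : 'rV[R]_N) : nat -> R := fun k => if insub k is Some i then v ord0 i else 0.
have tofE : forall v (i : 'I_N), tof v i = v ord0 i.
  by move=> v i; rewrite /tof valK.
have agreeP : forall y y', (forall k, lt k N -> y k = y' k) -> P y -> P y'.
  move=> y y' Hyy Py; apply: Hcl => eps Heps; exists y; split => // k Hk.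
  by rewrite Hyy // Rminus_diag Rabs_R0.
have agreef : forall y y', (forall k, lt k N -> y k = y' k) -> P y -> f y = f y'.
  move=> y y' Hyy Py; have Py' := agreeP _ _ Hyy Py.
  case: (Req_dec (f y) (f y')) => // Hne; exfalso.
  have Hlt : Rlt 0 (Rabs (f y - f y')) by apply: Rabs_pos_lt; apply: Rminus_eq_contra.
  have [del [Hdel Hz]] := Hct _ Py _ Hlt.
  have := Hz _ Py' => /(_ (fun k Hk => ltac:(rewrite Hyy // Rminus_diag Rabs_R0; exact Hdel))).
  exact: Rlt_irrefl.
have rowE : forall (y : nat -> R) k, lt k N -> tof (\row_(i < N) y i) k = y k.
  move=> y k /ssrnat.ltP Hk; rewrite /tof insubT /= mxE //.
pose A := [set v : 'rV[R]_N | P (tof v)].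
have PA : forall y : nat -> R, P y -> A (\row_(i < N) y i).
  move=> y Py; rewrite /A /=; apply: agreeP Py => k Hk; by rewrite rowE.
have clA : closed A.
  move=> v Hv; rewrite /A /=; apply: Hcl => eps Heps.
  have Heps' : (0 < eps)%R by apply/RltP.
  have Hn : \forall w \near v, forall i : 'I_N, `|v ord0 i - (w : 'rV[R]_N) ord0 i| < eps.
    apply: (@filter_forall _ 'I_N (fun i (w : 'rV[R]_N) => `|v ord0 i - w ord0 i| < eps) (nbhs v) _) => i.
    have H : (fun M : 'rV[R]_N => M ord0 i) @ v --> v ord0 i := @coord_continuous _ 1 N ord0 i v.
    have H2 := @cvgr_dist_lt _ R^o _ _ _ (fun M : 'rV[R]_N => M ord0 i) (v ord0 i) H eps Heps'.
    exact: H2.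
  have [w [Aw Hw]] := Hv _ Hn.
  exists (tof w); split => // k /ssrnat.ltP Hk.
  have -> : k = nat_of_ord (Ordinal Hk) by [].
  rewrite !tofE; apply/RltP; exact: Hw.
have ctA : {within A, continuous (f \o tof)}.
  apply/subspace_continuousP => x Ax.
  apply/(@cvgrPdist_lt _ R^o) => e He.
  have He' : Rlt 0 e by apply/RltP.
  have [del [Hdel Hz]] := Hct _ Ax _ He'.
  have Hdel' : 0 < del by apply/RltP.
  have Hn : \forall w \near x, forall i : 'I_N, `|x ord0 i - (w : 'rV[R]_N) ord0 i| < del.
    apply: (@filter_forall _ 'I_N (fun i (w : 'rV[R]_N) => `|x ord0 i - w ord0 i| < del) (nbhs x) _) => i.
    have H : (fun M : 'rV[R]_N => M ord0 i) @ x --> x ord0 i := @coord_continuous _ 1 N ord0 i x.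
    have H2 := @cvgr_dist_lt _ R^o _ _ _ (fun M : 'rV[R]_N => M ord0 i) (x ord0 i) H del Hdel'.
    exact: H2.
  move: Hn; rewrite /within /=; apply: filterS => w Hw Aw.
  apply/RltP; apply: Hz => // k /ssrnat.ltP Hk.
  have -> : k = nat_of_ord (Ordinal Hk) by [].
  rewrite !tofE; apply/RltP; exact: Hw.
have cA : compact A.
  apply: (@subclosed_compact _ A [set v : 'rV[R]_N | forall i, `[-B, B]%classic (v ord0 i)]) => //.
    apply: (@rV_compact _ _ (fun=> `[-B, B]%classic)) => _.
    exact: segment_compact.
  move=> v Av i; have := Hb _ Av i (ssrnat.ltP (ltn_ord i)); rewrite tofE.
  move=> /RleP; rewrite ler_norml => /andP[h1 h2].
  by rewrite /= in_itv /= h1 h2.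
have A0 : A !=set0 by exists (\row_(i < N) y0 i); exact: PA.
have [c cA' Hmin] := @EVT_min_rV _ N (f \o tof) A A0 cA ctA.
exists (tof c); split; first by move: cA'; rewrite inE.
move=> z Pz; have Az := PA _ Pz.
have := Hmin _ (mem_set Az) => /RleP /=.
by rewrite -(agreef z (tof (\row_(i < N) z i))) // => k Hk; rewrite rowE.
Qed.
End MC.

From Stdlib Require Import Reals List Permutation Lra Lia ClassicalEpsilon Classical_Prop.
Import ListNotations.
Open Scope R_scope.

Lemma lsum_nil : lsum [] = 0. Proof. reflexivity. Qed.
Lemma lsum_cons a l : lsum (a :: l) = a + lsum l. Proof. reflexivity. Qed.

Lemma lsum_app l1 l2 : lsum (l1 ++ l2) = lsum l1 + lsum l2.
Proof. induction l1; simpl; [ring| rewrite IHl1; ring]. Qed.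

Lemma lsum_plus {A} (f g : A -> R) l :
  lsum (map (fun a => f a + g a) l) = lsum (map f l) + lsum (map g l).
Proof. induction l; simpl; [ring| rewrite IHl; ring]. Qed.

Lemma lsum_scal {A} (c : R) (f : A -> R) l :
  lsum (map (fun a => c * f a) l) = c * lsum (map f l).
Proof. induction l; simpl; [ring| rewrite IHl; ring]. Qed.

Lemma lsum_ext {A} (f g : A -> R) l :
  (forall a, In a l -> f a = g a) -> lsum (map f l) = lsum (map g l).
Proof. intro H. f_equal. apply map_ext_in. exact H. Qed.

Lemma lsum_le {A} (f g : A -> R) l :
  (forall a, In a l -> f a <= g a) -> lsum (map f l) <= lsum (map g l).
Proof.
  induction l; simpl; intro H; [lra|].
  assert (f a <= g a) by (apply H; auto).
  assert (lsum (map f l) <= lsum (map g l)) by (apply IHl; intros; apply H; auto). lra.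
Qed.

Lemma lsum_nonneg {A} (f : A -> R) l :
  (forall a, In a l -> 0 <= f a) -> 0 <= lsum (map f l).
Proof.
  induction l; simpl; intro H; [lra|].
  assert (0 <= f a) by (apply H; auto).
  assert (0 <= lsum (map f l)) by (apply IHl; intros; apply H; auto). lra.
Qed.

Lemma lsum_const {A} (c : R) (l : list A) :
  lsum (map (fun _ => c) l) = INR (length l) * c.
Proof. induction l; simpl length; [simpl; ring| rewrite S_INR; simpl; rewrite IHl; ring]. Qed.

Lemma lsum_flat_map {A B} (f : B -> R) (g : A -> list B) l :
  lsum (map f (flat_map g l)) = lsum (map (fun a => lsum (map f (g a))) l).
Proof. induction l; simpl; [reflexivity|]. rewrite map_app, lsum_app, IHl. reflexivity. Qed.

Lemma lsum_swap {A B} (f : A -> B -> R) l1 l2 :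
  lsum (map (fun a => lsum (map (fun b => f a b) l2)) l1) =
  lsum (map (fun b => lsum (map (fun a => f a b) l1)) l2).
Proof.
  induction l1; simpl.
  - symmetry. transitivity (lsum (map (fun _ : B => 0) l2)); [apply lsum_ext; reflexivity| rewrite lsum_const; ring].
  - rewrite IHl1. rewrite <- lsum_plus. reflexivity.
Qed.

Lemma lsum_abs {A} (f : A -> R) l :
  Rabs (lsum (map f l)) <= lsum (map (fun a => Rabs (f a)) l).
Proof.
  induction l; simpl; [rewrite Rabs_R0; lra|].
  eapply Rle_trans; [apply Rabs_triang|]. lra.
Qed.

Lemma lsum_lt {A} (f : A -> R) (c : R) l :
  (forall a, In a l -> f a <= c) -> (exists a, In a l /\ f a < c) ->
  lsum (map f l) < INR (length l) * c.
Proof.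
  induction l as [|b l IH]; intros H [a [Ha Hlt]]; [destruct Ha|].
  simpl length; rewrite S_INR; simpl.
  destruct Ha as [<-|Ha].
  - assert (lsum (map f l) <= INR (length l) * c).
    { rewrite <- lsum_const. apply lsum_le. intros; apply H; simpl; auto. }
    lra.
  - assert (lsum (map f l) < INR (length l) * c).
    { apply IH; [intros; apply H; simpl; auto| exists a; auto]. }
    assert (f b <= c) by (apply H; simpl; auto). lra.
Qed.

Lemma lsum_pos_ex {A} (f : A -> R) l :
  0 < lsum (map f l) -> exists a, In a l /\ f a <> 0.
Proof.
  induction l as [|b l IH]; simpl; intro H; [lra|].
  destruct (Req_dec (f b) 0) as [E|E].
  - rewrite E in H. destruct IH as [a [Ha Hfa]]; [lra|]. exists a; auto.
  - exists b; auto.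
Qed.

Lemma lsum_pos {A} (f : A -> R) l a :
  (forall b, In b l -> 0 <= f b) -> In a l -> 0 < f a -> 0 < lsum (map f l).
Proof.
  induction l as [|b l IH]; simpl; intros H Ha Hfa; [destruct Ha|].
  assert (0 <= f b) by auto.
  assert (0 <= lsum (map f l)) by (apply lsum_nonneg; auto).
  destruct Ha as [<-|Ha]; [lra|].
  assert (0 < lsum (map f l)) by (apply IH; auto). lra.
Qed.

Lemma lsum_zero_each {A} (f : A -> R) l :
  (forall b, In b l -> 0 <= f b) -> lsum (map f l) <= 0 -> forall a, In a l -> f a = 0.
Proof.
  intros H Hs a Ha. destruct (Rle_lt_or_eq_dec 0 (f a) (H a Ha)) as [Hlt|Heq]; [|auto].
  assert (0 < lsum (map f l)) by (apply lsum_pos with a; auto). lra.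
Qed.

Lemma term_le_lsum {A} (f : A -> R) l a :
  (forall b, In b l -> 0 <= f b) -> In a l -> f a <= lsum (map f l).
Proof.
  induction l as [|b l IH]; simpl; intros H Ha; [destruct Ha|].
  assert (0 <= f b) by auto.
  assert (0 <= lsum (map f l)) by (apply lsum_nonneg; auto).
  destruct Ha as [<-|Ha]; [lra|].
  assert (f a <= lsum (map f l)) by (apply IH; auto). lra.
Qed.

Definition ev (i : nat) : nat -> R := fun p => if Nat.eqb p i then 1 else 0.

Lemma lsum_sel_gen (i : nat) (g : nat -> R) l :
  NoDup l -> In i l -> lsum (map (fun p => ev i p * g p) l) = g i.
Proof.
  induction l as [|b l IH]; intros Hnd Hi; [destruct Hi|].
  inversion Hnd; subst. simpl. unfold ev at 1.
  destruct Hi as [<-|Hi].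
  - rewrite Nat.eqb_refl.
    rewrite (lsum_ext _ (fun _ => 0)). rewrite lsum_const. ring.
    intros a Ha. unfold ev. destruct (Nat.eqb_spec a b); [subst; contradiction|ring].
  - destruct (Nat.eqb_spec b i); [subst; contradiction|]. rewrite IH; auto. ring.
Qed.

Lemma lsum_sel (n i : nat) (g : nat -> R) :
  (i < n)%nat -> lsum (map (fun p => ev i p * g p) (seq 0 n)) = g i.
Proof. intro H. apply lsum_sel_gen; [apply seq_NoDup| apply in_seq; lia]. Qed.

Definition normsq (n : nat) (v : nat -> R) : R := lsum (map (fun i => v i ^ 2) (seq 0 n)).
Definition dot (n : nat) (u v : nat -> R) : R := lsum (map (fun i => u i * v i) (seq 0 n)).

Lemma normsq_nonneg n v : 0 <= normsq n v.
Proof. apply lsum_nonneg. intros; apply pow2_ge_0. Qed.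

Lemma normsq_ev n i : (i < n)%nat -> normsq n (ev i) = 1.
Proof.
  intro H. unfold normsq. rewrite (lsum_ext _ (fun p => ev i p * 1)).
  - apply lsum_sel; auto.
  - intros a _. unfold ev. destruct (Nat.eqb a i); ring.
Qed.

Lemma dot_ev n u i : (i < n)%nat -> dot n u (ev i) = u i.
Proof.
  intro H. unfold dot. rewrite (lsum_ext _ (fun p => ev i p * u p)).
  - apply lsum_sel; auto.
  - intros; ring.
Qed.

Lemma dot_le_unit n u w : normsq n u = 1 -> normsq n w = 1 -> dot n u w <= 1.
Proof.
  intros Hu Hw.
  assert (0 <= lsum (map (fun i => (u i - w i)^2) (seq 0 n))) by (apply lsum_nonneg; intros; apply pow2_ge_0).
  rewrite (lsum_ext _ (fun i => u i ^ 2 + (-2) * (u i * w i) + w i ^ 2)) in H by (intros; ring).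
  rewrite !lsum_plus, lsum_scal in H. unfold normsq, dot in *. lra.
Qed.

Lemma unit_vecs_iff n d x : unit_vecs n d x <-> forall j, (j < d)%nat -> normsq n (x j) = 1.
Proof.
  unfold unit_vecs, normsq. split; intros H j Hj; specialize (H j Hj).
  - rewrite <- (sqrt_sqrt (lsum _)) by (apply lsum_nonneg; intros; apply pow2_ge_0).
    rewrite H. ring.
  - rewrite H. apply sqrt_1.
Qed.

Lemma dual_bound n u M : (1 <= n)%nat ->
  (forall w, normsq n w = 1 -> dot n u w <= M) -> normsq n u <= M ^ 2 /\ 0 <= M.
Proof.
  intros Hn H.
  assert (HM : 0 <= M).
  { assert (H1 := H (ev 0) (normsq_ev n 0 ltac:(lia))). rewrite dot_ev in H1 by lia.
    assert (H2 := H (fun p => - ev 0 p)).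
    assert (normsq n (fun p => - ev 0 p) = 1).
    { unfold normsq. rewrite <- (normsq_ev n 0) by lia. unfold normsq. apply lsum_ext; intros; ring. }
    specialize (H2 H0). unfold dot in H2.
    rewrite (lsum_ext _ (fun p => -1 * (u p * ev 0 p))) in H2 by (intros; ring).
    rewrite lsum_scal in H2. fold (dot n u (ev 0)) in H2. rewrite dot_ev in H2 by lia. lra. }
  split; [|exact HM].
  destruct (Req_dec (normsq n u) 0) as [E|E].
  - rewrite E. apply pow2_ge_0.
  - assert (Hp : 0 < normsq n u) by (pose proof (normsq_nonneg n u); lra).
    set (r := sqrt (normsq n u)).
    assert (Hr : 0 < r) by (apply sqrt_lt_R0; auto).
    assert (Hrr : r * r = normsq n u) by (apply sqrt_sqrt; lra).
    assert (Hw : normsq n (fun p => u p / r) = 1).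
    { unfold normsq. rewrite (lsum_ext _ (fun p => / (r*r) * (u p ^ 2))) by (intros; field; lra).
      rewrite lsum_scal. fold (normsq n u). rewrite Hrr. field. lra. }
    specialize (H _ Hw). unfold dot in H.
    rewrite (lsum_ext _ (fun p => / r * (u p ^ 2))) in H by (intros; field; lra).
    rewrite lsum_scal in H. fold (normsq n u) in H. rewrite <- Hrr in H.
    replace (/ r * (r * r)) with r in H by (field; lra).
    rewrite <- Hrr. nra.
Qed.
Definition shift (x : vecs) : vecs := fun j => x (S j).
Definition cons_vec (v : nat -> R) (x : vecs) : vecs :=
  fun j => match j with O => v | S j' => x j' end.
Definition sumsq (n d : nat) (A : tensor) : R := lsum (map (fun idx => A idx ^ 2) (indices n d)).

Lemma frob_sumsq n d A : frob n d A = sqrt (sumsq n d A).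
Proof. reflexivity. Qed.

Lemma sumsq_nonneg n d A : 0 <= sumsq n d A.
Proof. apply lsum_nonneg. intros; apply pow2_ge_0. Qed.

Lemma prodx_shift x r : forall j, prodx x (S j) r = prodx (shift x) j r.
Proof. induction r as [|i r IH]; intro j; simpl; [reflexivity|]. rewrite IH. reflexivity. Qed.

Lemma mform_0 n B x : mform n 0 B x = B [].
Proof. unfold mform. simpl. ring. Qed.

Lemma sumsq_0 n B : sumsq n 0 B = B [] ^ 2.
Proof. unfold sumsq. simpl. ring. Qed.

Lemma sumsq_S n k A :
  sumsq n (S k) A = lsum (map (fun i => sumsq n k (fun r => A (i :: r))) (seq 0 n)).
Proof.
  unfold sumsq. simpl indices. rewrite lsum_flat_map. apply lsum_ext. intros.
  rewrite map_map. reflexivity.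
Qed.

Lemma mform_S n k A x :
  mform n (S k) A x = lsum (map (fun i => x 0%nat i * mform n k (fun r => A (i :: r)) (shift x)) (seq 0 n)).
Proof.
  unfold mform. simpl indices. rewrite lsum_flat_map. apply lsum_ext. intros i _.
  rewrite map_map. rewrite <- lsum_scal. apply lsum_ext. intros r _. simpl.
  rewrite prodx_shift. ring.
Qed.

Lemma In_indices n : forall d idx, In idx (indices n d) <-> (length idx = d /\ forall a, In a idx -> (a < n)%nat).
Proof.
  induction d as [|d IH]; intro idx; simpl.
  - split.
    + intros [<-|[]]. split; [reflexivity| intros a []].
    + intros [H _]. destruct idx; [auto| discriminate].
  - rewrite in_flat_map. split.
    + intros [i [Hi Hm]]. apply in_map_iff in Hm. destruct Hm as [r [<- Hr]].
      apply IH in Hr. destruct Hr as [Hl Ha]. apply in_seq in Hi.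
      split; [simpl; lia|]. intros a [<-|Ha']; [lia| auto].
    + intros [Hl Ha]. destruct idx as [|i r]; [discriminate|].
      exists i. split; [apply in_seq; specialize (Ha i (or_introl eq_refl)); lia|].
      apply in_map. apply IH. split; [simpl in Hl; lia| intros; apply Ha; simpl; auto].
Qed.

Lemma mform_ext n d A A' x :
  (forall idx, In idx (indices n d) -> A idx = A' idx) -> mform n d A x = mform n d A' x.
Proof. intro H. unfold mform. apply lsum_ext. intros. rewrite H; auto. Qed.

Lemma sumsq_ext n d A A' :
  (forall idx, In idx (indices n d) -> A idx = A' idx) -> sumsq n d A = sumsq n d A'.
Proof. intro H. unfold sumsq. apply lsum_ext. intros. rewrite H; auto. Qed.

Lemma unit_cons n d v x : normsq n v = 1 -> unit_vecs n d x -> unit_vecs n (S d) (cons_vec v x).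
Proof.
  intros Hv Hx. apply unit_vecs_iff. pose proof (proj1 (unit_vecs_iff _ _ _) Hx) as Hx0; clear Hx; rename Hx0 into Hx.
  intros [|j] Hj; simpl; [auto| apply Hx; lia].
Qed.

Lemma unit_shift n d x : unit_vecs n (S d) x -> unit_vecs n d (shift x).
Proof.
  intros Hx. apply unit_vecs_iff. pose proof (proj1 (unit_vecs_iff _ _ _) Hx) as Hx0; clear Hx; rename Hx0 into Hx. intros j Hj. apply Hx. lia.
Qed.

Lemma mform_cons_ev n k A x i : (i < n)%nat ->
  mform n (S k) A (cons_vec (ev i) x) = mform n k (fun r => A (i :: r)) x.
Proof.
  intro H. rewrite mform_S. simpl. apply (lsum_sel n i (fun p => mform n k (fun r => A (p :: r)) x)). auto.
Qed.

Lemma fiber_bound n (Hn : (1 <= n)%nat) : forall k A M,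
  (forall x, unit_vecs n (S k) x -> mform n (S k) A x <= M) ->
  sumsq n (S k) A <= INR n ^ k * M ^ 2 /\ 0 <= M.
Proof.
  induction k as [|k IH]; intros A M H.
  - assert (D := dual_bound n (fun i => A [i]) M Hn).
    assert (E : sumsq n 1 A = normsq n (fun i => A [i])).
    { rewrite sumsq_S. apply lsum_ext. intros. rewrite sumsq_0. reflexivity. }
    rewrite E. simpl pow. rewrite Rmult_1_l. apply D.
    intros w Hw. specialize (H (fun _ => w)).
    rewrite mform_S in H. unfold dot.
    rewrite (lsum_ext _ (fun i => w i * mform n 0 (fun r => A (i :: r)) (shift (fun _ => w)))).
    + apply H. apply unit_vecs_iff. intros; auto.
    + intros. rewrite mform_0. ring.
  - assert (Hi : forall i, (i < n)%nat -> sumsq n (S k) (fun r => A (i :: r)) <= INR n ^ k * M ^ 2 /\ 0 <= M).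
    { intros i Hi. apply IH. intros x Hx. rewrite <- mform_cons_ev by auto. apply H.
      apply unit_cons; auto. apply normsq_ev; auto. }
    destruct (Hi 0%nat ltac:(lia)) as [_ HM]. split; [|auto].
    rewrite sumsq_S. eapply Rle_trans.
    + apply (lsum_le _ (fun _ => INR n ^ k * M ^ 2)). intros i Hin. apply in_seq in Hin. apply Hi. lia.
    + rewrite lsum_const, length_seq. simpl pow. right. ring.
Qed.

Lemma spectral_lower n k A s : (1 <= n)%nat -> is_spectral_norm n (S k) A s ->
  sumsq n (S k) A <= INR n ^ k * s ^ 2 /\ 0 <= s.
Proof. intros Hn [_ H]. apply fiber_bound; auto. Qed.

Lemma nonzero_sumsq_pos n d A : Defs.nonzero n d A -> 0 < sumsq n d A.
Proof.
  intros [idx [Hin Hne]]. apply lsum_pos with idx; auto.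
  - intros; apply pow2_ge_0.
  - simpl. rewrite Rmult_1_r. apply Rsqr_pos_lt. exact Hne.
Qed.

Lemma sumsq_pos_nonzero n d A : 0 < sumsq n d A -> Defs.nonzero n d A.
Proof.
  intro H. apply lsum_pos_ex in H. destruct H as [idx [Hin Hne]]. exists idx. split; auto.
  intro E. apply Hne. rewrite E. ring.
Qed.
Definition zfib (m : nat) (B : tensor) : nat -> R := fun k => B (repeat 0%nat m ++ [k]).

Lemma zfib_mform n (Hn : (1 <= n)%nat) : forall m B x,
  (forall j, (j < m)%nat -> x j = ev 0) -> mform n (S m) B x = dot n (zfib m B) (x m).
Proof.
  induction m as [|m IH]; intros B x Hx.
  - rewrite mform_S. unfold dot. apply lsum_ext. intros. rewrite mform_0. unfold zfib. simpl. ring.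
  - rewrite mform_S. rewrite (Hx 0%nat ltac:(lia)).
    rewrite (lsum_sel n 0 (fun p => mform n (S m) (fun r => B (p :: r)) (shift x))) by lia.
    rewrite IH.
    + reflexivity.
    + intros j Hj. unfold shift. apply Hx. lia.
Qed.

Lemma sumsq_1 n B : sumsq n 1 B = normsq n (zfib 0 B).
Proof. rewrite sumsq_S. apply lsum_ext. intros. rewrite sumsq_0. reflexivity. Qed.

Lemma zfib_strict n (Hn : (1 <= n)%nat) : forall m B M,
  (forall x, unit_vecs n (S m) x -> mform n (S m) B x <= M) ->
  normsq n (zfib m B) < M ^ 2 -> sumsq n (S m) B < INR n ^ m * M ^ 2.
Proof.
  induction m as [|m IH]; intros B M H Hlt.
  - rewrite sumsq_1. simpl. lra.
  - rewrite sumsq_S.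
    replace (INR n ^ S m * M ^ 2) with (INR (length (seq 0 n)) * (INR n ^ m * M ^ 2))
      by (rewrite length_seq; simpl; ring).
    assert (Hb : forall i, (i < n)%nat -> forall x, unit_vecs n (S m) x ->
               mform n (S m) (fun r => B (i :: r)) x <= M).
    { intros i Hi x Hx. rewrite <- mform_cons_ev by auto. apply H.
      apply unit_cons; auto. apply normsq_ev; auto. }
    apply lsum_lt.
    + intros i Hin. apply in_seq in Hin. apply fiber_bound; auto. apply Hb. lia.
    + exists 0%nat. split; [apply in_seq; lia|]. apply IH; [apply Hb; lia|]. exact Hlt.
Qed.

Lemma normsq_dot n v : normsq n v = dot n v v.
Proof. unfold normsq, dot. apply lsum_ext. intros; ring. Qed.

Lemma normsq3 n c1 c2 c3 f g h :
  normsq n (fun k => c1 * f k + c2 * g k + c3 * h k) =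
  c1^2 * dot n f f + c2^2 * dot n g g + c3^2 * dot n h h +
  2*c1*c2 * dot n f g + 2*c2*c3 * dot n g h + 2*c1*c3 * dot n f h.
Proof.
  unfold normsq, dot.
  rewrite (lsum_ext _ (fun k => c1^2 * (f k * f k) + (c2^2 * (g k * g k) + (c3^2 * (h k * h k) +
     (2*c1*c2 * (f k * g k) + (2*c2*c3 * (g k * h k) + 2*c1*c3 * (f k * h k))))))) by (intros; ring).
  rewrite !lsum_plus, !lsum_scal. ring.
Qed.

Lemma comb_sel n i j a b (G : nat -> R) : (i < n)%nat -> (j < n)%nat ->
  lsum (map (fun p => (a * ev i p + b * ev j p) * G p) (seq 0 n)) = a * G i + b * G j.
Proof.
  intros Hi Hj.
  rewrite (lsum_ext _ (fun p => a * (ev i p * G p) + b * (ev j p * G p))) by (intros; ring).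
  rewrite lsum_plus, !lsum_scal, !lsum_sel by auto. reflexivity.
Qed.

Lemma normsq_comb2 n i j a b : (i < n)%nat -> (j < n)%nat -> i <> j ->
  normsq n (fun p => a * ev i p + b * ev j p) = a ^ 2 + b ^ 2.
Proof.
  intros Hi Hj Hij. unfold normsq.
  rewrite (lsum_ext _ (fun p => (a * ev i p + b * ev j p) * (fun q => a * ev i q + b * ev j q) p)) by (intros; ring).
  rewrite comb_sel by auto. unfold ev. rewrite !Nat.eqb_refl.
  destruct (Nat.eqb_spec i j); [contradiction|]. destruct (Nat.eqb_spec j i); [subst; contradiction|]. ring.
Qed.

Definition tailx (m : nat) (w : nat -> R) : vecs := fun l => if Nat.ltb l m then ev 0 else w.

Lemma tailx_unit n m w : (1 <= n)%nat -> normsq n w = 1 -> unit_vecs n (S m) (tailx m w).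
Proof.
  intros Hn Hw. apply unit_vecs_iff. intros j Hj. unfold tailx.
  destruct (Nat.ltb j m); [apply normsq_ev; lia| auto].
Qed.

Lemma tailx_mform n (Hn : (1 <= n)%nat) m B w :
  mform n (S m) B (tailx m w) = dot n (zfib m B) w.
Proof.
  rewrite zfib_mform; auto.
  - unfold tailx. rewrite Nat.ltb_irrefl. reflexivity.
  - intros j Hj. unfold tailx. apply Nat.ltb_lt in Hj. rewrite Hj. reflexivity.
Qed.

Lemma dot_sym n u v : dot n u v = dot n v u.
Proof. unfold dot. apply lsum_ext. intros; ring. Qed.

Lemma dot_ext_l n u u' v : (forall k, (k < n)%nat -> u k = u' k) -> dot n u v = dot n u' v.
Proof. intro H. unfold dot. apply lsum_ext. intros k Hk. apply in_seq in Hk. rewrite H by lia. reflexivity. Qed.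

Lemma dot3 n c1 c2 c3 f g h w :
  dot n (fun k => c1 * f k + c2 * g k + c3 * h k) w = c1 * dot n f w + c2 * dot n g w + c3 * dot n h w.
Proof.
  unfold dot. rewrite (lsum_ext _ (fun k => c1 * (f k * w k) + (c2 * (g k * w k) + c3 * (h k * w k)))) by (intros; ring).
  rewrite !lsum_plus, !lsum_scal. ring.
Qed.

Section Strict.
Variables (n m : nat) (A : tensor) (s : R).
Hypothesis Hn : (3 <= n)%nat.
Hypothesis Hsym : is_symmetric n (S (S (S m))) A.
Hypothesis Hmax : forall x, unit_vecs n (S (S (S m))) x -> mform n (S (S (S m))) A x <= s.

Let V (i j : nat) : nat -> R := zfib m (fun r => A (i :: j :: r)).

Lemma Vsym i j k : (i < n)%nat -> (j < n)%nat -> (k < n)%nat -> V j i k = V i j k.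
Proof.
  intros Hi Hj Hk. unfold V, zfib. symmetry. apply Hsym.
  - apply In_indices. split.
    + simpl. rewrite length_app, repeat_length. simpl. lia.
    + intros a Ha. simpl in Ha. destruct Ha as [<-|[<-|Ha]]; auto.
      apply in_app_iff in Ha. destruct Ha as [Ha|[<-|[]]]; auto.
      apply repeat_spec in Ha. lia.
  - apply perm_swap.
Qed.

Lemma test_ineq i j a b c d : (i < n)%nat -> (j < n)%nat -> i <> j ->
  a^2 + b^2 = 1 -> c^2 + d^2 = 1 ->
  normsq n (fun k => (a*c) * V i i k + (a*d + b*c) * V i j k + (b*d) * V j j k) <= s ^ 2.
Proof.
  intros Hi Hj Hij Hab Hcd.
  apply dual_bound; [lia|]. intros w Hw.
  set (x := cons_vec (fun p => a * ev i p + b * ev j p)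
              (cons_vec (fun p => c * ev i p + d * ev j p) (tailx m w))).
  assert (Hx : unit_vecs n (S (S (S m))) x).
  { apply unit_cons; [rewrite normsq_comb2; auto|].
    apply unit_cons; [rewrite normsq_comb2; auto|]. apply tailx_unit; auto; lia. }
  specialize (Hmax x Hx).
  rewrite mform_S in Hmax. unfold x at 1 in Hmax. simpl in Hmax.
  rewrite (comb_sel n i j a b (fun p => mform n (S (S m)) (fun r => A (p :: r)) (shift x))) in Hmax by auto.
  unfold shift, x in Hmax. simpl in Hmax.
  rewrite !mform_S in Hmax. simpl in Hmax.
  rewrite !(comb_sel n i j c d) in Hmax by auto.
  unfold shift in Hmax. simpl in Hmax.
  rewrite !(tailx_mform n ltac:(lia)) in Hmax.
  fold (V i i) (V i j) (V j i) (V j j) in Hmax.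
  rewrite (dot_ext_l n (V j i) (V i j)) in Hmax by (intros; apply Vsym; auto).
  rewrite dot3. lra.
Qed.

End Strict.
Lemma pair_zero n m A s i j : (3 <= n)%nat ->
  is_symmetric n (S (S (S m))) A ->
  (forall x, unit_vecs n (S (S (S m))) x -> mform n (S (S (S m))) A x <= s) ->
  (i < n)%nat -> (j < n)%nat -> i <> j ->
  let V := fun p q => zfib m (fun r => A (p :: q :: r)) in
  dot n (V i i) (V i i) = s^2 -> dot n (V i j) (V i j) = s^2 -> dot n (V j j) (V j j) = s^2 ->
  forall k, (k < n)%nat -> V i i k + V j j k = 0.
Proof.
  intros Hn Hsym Hmax Hi Hj Hij V HP HR HQ.
  assert (T := fun a b c d => test_ineq n m A s Hn Hsym Hmax i j a b c d Hi Hj Hij).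
  assert (T1 := T (3/5) (4/5) 1 0 ltac:(lra) ltac:(lra)).
  assert (T2 := T (3/5) (-(4/5)) 1 0 ltac:(lra) ltac:(lra)).
  assert (T3 := T (3/5) (4/5) 0 1 ltac:(lra) ltac:(lra)).
  assert (T4 := T (3/5) (-(4/5)) 0 1 ltac:(lra) ltac:(lra)).
  assert (T5 := T (3/5) (4/5) (3/5) (4/5) ltac:(lra) ltac:(lra)).
  clear T. fold V in T1, T2, T3, T4, T5.
  rewrite normsq3 in T1, T2, T3, T4, T5.
  rewrite HP, HR, HQ in T1, T2, T3, T4, T5.
  assert (He : dot n (V i i) (V j j) <= - s^2) by lra.
  assert (Hz : normsq n (fun k => 1 * V i i k + 0 * V i j k + 1 * V j j k) <= 0).
  { rewrite normsq3. rewrite HP, HQ. lra. }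
  intros k Hk.
  assert (E := lsum_zero_each _ _ (fun b _ => pow2_ge_0 _) Hz k ltac:(apply in_seq; lia)).
  simpl in E. nra.
Qed.

Lemma sym_strict n m A s : (3 <= n)%nat ->
  is_symmetric n (S (S (S m))) A -> Defs.nonzero n (S (S (S m))) A ->
  is_spectral_norm n (S (S (S m))) A s ->
  sumsq n (S (S (S m))) A < INR n ^ (S (S m)) * s ^ 2.
Proof.
  intros Hn Hsym Hnz Hspec.
  assert (Hn1 : (1 <= n)%nat) by lia.
  destruct (spectral_lower n (S (S m)) A s Hn1 Hspec) as [Hlow Hs0].
  destruct Hspec as [_ Hmax].
  set (V := fun p q => zfib m (fun r => A (p :: q :: r))).
  assert (Bb : forall i j, (i < n)%nat -> (j < n)%nat -> forall x, unit_vecs n (S m) x ->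
             mform n (S m) (fun r => A (i :: j :: r)) x <= s).
  { intros i j Hi Hj x Hx.
    rewrite <- (mform_cons_ev n (S m) (fun r => A (i :: r)) x j Hj).
    rewrite <- (mform_cons_ev n (S (S m)) A _ i Hi). apply Hmax.
    apply unit_cons; [apply normsq_ev; auto|]. apply unit_cons; [apply normsq_ev; auto| auto]. }
  assert (Vle : forall i j, (i < n)%nat -> (j < n)%nat -> normsq n (V i j) <= s ^ 2).
  { intros i j Hi Hj. apply dual_bound; auto. intros w Hw. unfold V.
    rewrite <- tailx_mform by auto. apply Bb; auto. apply tailx_unit; auto. }
  assert (Hex : exists i j, (i < n)%nat /\ (j < n)%nat /\ normsq n (V i j) < s ^ 2).
  { apply Classical_Prop.NNPP. intro Hno.
    assert (Vge : forall i j, (i < n)%nat -> (j < n)%nat -> dot n (V i j) (V i j) = s ^ 2).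
    { intros i j Hi Hj. rewrite <- normsq_dot. apply Rle_antisym; [apply Vle; auto|].
      apply Rnot_lt_le. intro Hlt. apply Hno. exists i, j. auto. }
    assert (P01 := pair_zero n m A s 0%nat 1%nat Hn Hsym Hmax ltac:(lia) ltac:(lia) ltac:(lia)
                     (Vge 0%nat 0%nat ltac:(lia) ltac:(lia)) (Vge 0%nat 1%nat ltac:(lia) ltac:(lia)) (Vge 1%nat 1%nat ltac:(lia) ltac:(lia))).
    assert (P12 := pair_zero n m A s 1%nat 2%nat Hn Hsym Hmax ltac:(lia) ltac:(lia) ltac:(lia)
                     (Vge 1%nat 1%nat ltac:(lia) ltac:(lia)) (Vge 1%nat 2%nat ltac:(lia) ltac:(lia)) (Vge 2%nat 2%nat ltac:(lia) ltac:(lia))).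
    assert (P02 := pair_zero n m A s 0%nat 2%nat Hn Hsym Hmax ltac:(lia) ltac:(lia) ltac:(lia)
                     (Vge 0%nat 0%nat ltac:(lia) ltac:(lia)) (Vge 0%nat 2%nat ltac:(lia) ltac:(lia)) (Vge 2%nat 2%nat ltac:(lia) ltac:(lia))).
    simpl in P01, P12, P02. fold V in P01, P12, P02.
    assert (Z : dot n (V 0%nat 0%nat) (V 0%nat 0%nat) = 0).
    { unfold dot. rewrite (lsum_ext _ (fun _ => 0)).
      - rewrite lsum_const. ring.
      - intros k Hk. apply in_seq in Hk.
        assert (H1 := P01 k ltac:(lia)). assert (H2 := P12 k ltac:(lia)). assert (H3 := P02 k ltac:(lia)).
        assert (V 0%nat 0%nat k = 0) by (unfold V in *; cbv beta zeta in *; lra). rewrite H. ring. }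
    rewrite Vge in Z by lia.
    assert (Hpos := nonzero_sumsq_pos _ _ _ Hnz). rewrite Z in Hlow. lra. }
  destruct Hex as [i0 [j0 [Hi0 [Hj0 Hlt0]]]].
  rewrite sumsq_S.
  replace (INR n ^ S (S m) * s ^ 2) with (INR (length (seq 0 n)) * (INR (length (seq 0 n)) * (INR n ^ m * s ^ 2)))
    by (rewrite length_seq; simpl; ring).
  assert (Inner : forall i, (i < n)%nat -> sumsq n (S (S m)) (fun r => A (i :: r)) <= INR (length (seq 0 n)) * (INR n ^ m * s ^ 2)).
  { intros i Hi. rewrite sumsq_S. rewrite <- lsum_const. apply lsum_le. intros j Hj. apply in_seq in Hj.
    apply fiber_bound; auto. apply Bb; auto; lia. }
  apply lsum_lt.
  - intros i Hin. apply in_seq in Hin. apply Inner. lia.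
  - exists i0. split; [apply in_seq; lia|]. rewrite sumsq_S. apply lsum_lt.
    + intros j Hj. apply in_seq in Hj. apply fiber_bound; auto. apply Bb; auto; lia.
    + exists j0. split; [apply in_seq; lia|]. apply zfib_strict; auto.
Qed.
Record compo (n : nat) (mul : (nat -> R) -> (nat -> R) -> (nat -> R)) : Prop := {
  c_n : (1 <= n)%nat;
  c_ext1 : forall q q' y k, (forall m, (m < n)%nat -> q m = q' m) -> mul q y k = mul q' y k;
  c_lin1 : forall a b q q' y k, mul (fun m => a * q m + b * q' m) y k = a * mul q y k + b * mul q' y k;
  c_lin2 : forall p c k, lsum (map (fun i => c i * mul p (ev i) k) (seq 0 n)) = mul p c k;
  c_norm : forall p q, normsq n (mul p q) = normsq n p * normsq n q;
  c_e0 : forall k, (k < n)%nat -> mul (ev 0) (ev 0) k = ev 0 k }.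

Fixpoint Tens (mul : (nat -> R) -> (nat -> R) -> (nat -> R)) (p : nat -> R) (idx : list nat) : R :=
  match idx with
  | [] => 0
  | i :: r => match r with [] => p i | _ :: _ => Tens mul (mul p (ev i)) r end
  end.

Fixpoint prodvec (mul : (nat -> R) -> (nat -> R) -> (nat -> R)) (p : nat -> R) (x : vecs) (k : nat) : nat -> R :=
  match k with
  | O => p
  | S k' => prodvec mul (mul p (x 0%nat)) (shift x) k'
  end.

Section Compo.
Variables (n : nat) (mul : (nat -> R) -> (nat -> R) -> (nat -> R)).
Hypothesis H : compo n mul.

Lemma mul_zero y k : mul (fun _ => 0) y k = 0.
Proof.
  rewrite (c_ext1 _ _ H _ (fun m => 0 * y m + 0 * y m)) by (intros; ring).
  rewrite (c_lin1 _ _ H). ring.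
Qed.

Lemma mul_lsum (l : list nat) (c : nat -> R) (q : nat -> nat -> R) y k :
  mul (fun m => lsum (map (fun i => c i * q i m) l)) y k = lsum (map (fun i => c i * mul (q i) y k) l).
Proof.
  induction l as [|a l IH]; simpl.
  - apply mul_zero.
  - rewrite (c_ext1 _ _ H _ (fun m => c a * q a m + 1 * lsum (map (fun i => c i * q i m) l))) by (intros; ring).
    rewrite (c_lin1 _ _ H). rewrite IH. ring.
Qed.

Lemma prodvec_ext : forall k q q' y, (forall m, (m < n)%nat -> q m = q' m) ->
  forall m, (m < n)%nat -> prodvec mul q y k m = prodvec mul q' y k m.
Proof.
  induction k as [|k IH]; intros q q' y Hq m Hm; simpl; [auto|].
  apply IH; auto. intros. apply (c_ext1 _ _ H). auto.
Qed.

Lemma Phi_lin : forall k y w (l : list nat) (c : nat -> R) (q : nat -> nat -> R) (q0 : nat -> R),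
  (forall m, (m < n)%nat -> q0 m = lsum (map (fun i => c i * q i m) l)) ->
  lsum (map (fun i => c i * dot n (prodvec mul (q i) y k) w) l) = dot n (prodvec mul q0 y k) w.
Proof.
  induction k as [|k IH]; intros y w l c q q0 Hq; simpl.
  - unfold dot. rewrite (lsum_ext _ (fun i => lsum (map (fun m => c i * q i m * w m) (seq 0 n)))).
    + rewrite lsum_swap. apply lsum_ext. intros m Hm. apply in_seq in Hm.
      rewrite Hq by lia. rewrite <- (Rmult_comm (w m)), <- lsum_scal. apply lsum_ext. intros; ring.
    + intros i _. rewrite <- lsum_scal. apply lsum_ext. intros; ring.
  - apply IH. intros m Hm. rewrite <- mul_lsum. apply (c_ext1 _ _ H). auto.
Qed.

Lemma indices_S_cons k r : In r (indices n (S k)) -> exists i r', r = i :: r'.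
Proof.
  intro Hr. apply In_indices in Hr. destruct Hr as [Hl _].
  destruct r as [|i r']; [discriminate| eauto].
Qed.

Lemma indices_cons_In k i r : In (i :: r) (indices n (S k)) -> In r (indices n k).
Proof.
  intro Hr. apply In_indices in Hr. apply In_indices. destruct Hr as [Hl Ha].
  split; [simpl in Hl; lia| intros; apply Ha; simpl; auto].
Qed.

Lemma T_mform : forall k p x, mform n (S k) (Tens mul p) x = dot n (prodvec mul p x k) (x k).
Proof.
  induction k as [|k IH]; intros p x.
  - rewrite mform_S. unfold dot. apply lsum_ext. intros. rewrite mform_0. simpl. ring.
  - rewrite mform_S.
    rewrite (lsum_ext _ (fun i => x 0%nat i * dot n (prodvec mul (mul p (ev i)) (shift x) k) (shift x k))).
    + simpl. apply Phi_lin. intros m Hm. symmetry. apply (c_lin2 _ _ H).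
    + intros i _. f_equal. rewrite <- IH. apply mform_ext. intros r Hr.
      destruct (indices_S_cons k r Hr) as [j [r' ->]]. reflexivity.
Qed.

Lemma T_sumsq : forall k p, sumsq n (S k) (Tens mul p) = INR n ^ k * normsq n p.
Proof.
  induction k as [|k IH]; intros p.
  - rewrite sumsq_1. simpl. rewrite Rmult_1_l. reflexivity.
  - rewrite sumsq_S.
    rewrite (lsum_ext _ (fun i => INR n ^ k * normsq n p * normsq n (ev i))).
    + rewrite (lsum_ext _ (fun i => INR n ^ k * normsq n p * 1)).
      * rewrite lsum_const, length_seq. simpl. ring.
      * intros i Hi. apply in_seq in Hi. rewrite normsq_ev by lia. reflexivity.
    + intros i _. rewrite Rmult_assoc, <- (c_norm _ _ H). rewrite <- IH. apply sumsq_ext. intros r Hr.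
      destruct (indices_S_cons k r Hr) as [j [r' ->]]. reflexivity.
Qed.

Lemma prodvec_norm : forall k p x, (forall j, (j < k)%nat -> normsq n (x j) = 1) ->
  normsq n (prodvec mul p x k) = normsq n p.
Proof.
  induction k as [|k IH]; intros p x Hx; simpl; [reflexivity|].
  rewrite IH.
  - rewrite (c_norm _ _ H). rewrite Hx by lia. ring.
  - intros j Hj. apply Hx. lia.
Qed.

Lemma prodvec_e0 : forall k m, (m < n)%nat -> prodvec mul (ev 0) (fun _ => ev 0) k m = ev 0 m.
Proof.
  induction k as [|k IH]; intros m Hm; simpl; [reflexivity|].
  rewrite (prodvec_ext k _ (ev 0)); auto. intros. apply (c_e0 _ _ H). auto.
Qed.

Lemma full_ratio : forall k, is_approx_ratio full_space n (S k) (/ sqrt (INR n ^ k)).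
Proof.
  intro k. assert (Hn := c_n _ _ H).
  assert (Hpow : 0 < INR n ^ k) by (apply pow_lt; apply lt_0_INR; lia).
  split.
  - exists (Tens mul (ev 0)), 1. split; [exact I|].
    assert (Hss : sumsq n (S k) (Tens mul (ev 0)) = INR n ^ k).
    { rewrite T_sumsq, normsq_ev by lia. ring. }
    split; [apply sumsq_pos_nonzero; lra|]. split.
    + split.
      * exists (fun _ => ev 0). split; [apply unit_vecs_iff; intros; apply normsq_ev; lia|].
        rewrite T_mform. rewrite (dot_ext_l n _ (ev 0)) by (intros; apply prodvec_e0; auto).
        rewrite dot_ev by lia. unfold ev. simpl. reflexivity.
      * intros x Hx. pose proof (proj1 (unit_vecs_iff _ _ _) Hx) as Hx0. clear Hx. rename Hx0 into Hx. rewrite T_mform. apply dot_le_unit.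
        -- rewrite prodvec_norm; [apply normsq_ev; lia|]. intros; apply Hx; lia.
        -- apply Hx; lia.
    + rewrite frob_sumsq, Hss. unfold Rdiv. ring.
  - intros A s _ Hnz Hspec.
    destruct (spectral_lower n k A s Hn Hspec) as [Hlow Hs0].
    assert (Hpos := nonzero_sumsq_pos _ _ _ Hnz).
    rewrite frob_sumsq.
    assert (Hsq : sqrt (sumsq n (S k) A) <= sqrt (INR n ^ k) * s).
    { replace (sqrt (INR n ^ k) * s) with (sqrt (INR n ^ k * s ^ 2)).
      - apply sqrt_le_1_alt; lra.
      - rewrite sqrt_mult_alt by lra. rewrite sqrt_pow2 by lra. reflexivity. }
    assert (0 < sqrt (INR n ^ k)) by (apply sqrt_lt_R0; auto).
    assert (0 < sqrt (sumsq n (S k) A)) by (apply sqrt_lt_R0; auto).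
    apply (Rmult_le_reg_r (sqrt (sumsq n (S k) A))); auto.
    unfold Rdiv. rewrite Rmult_assoc, Rinv_l by lra. rewrite Rmult_1_r.
    apply (Rmult_le_reg_l (sqrt (INR n ^ k))); auto.
    rewrite <- Rmult_assoc, Rinv_r by lra. lra.
Qed.

End Compo.
Definition mul4 (p q : nat -> R) (k : nat) : R :=
  match k with
  | 0%nat =>  p 0%nat * q 0%nat - p 1%nat * q 1%nat - p 2%nat * q 2%nat - p 3%nat * q 3%nat
  | 1%nat =>  p 0%nat * q 1%nat + p 1%nat * q 0%nat + p 2%nat * q 3%nat - p 3%nat * q 2%nat
  | 2%nat =>  p 0%nat * q 2%nat - p 1%nat * q 3%nat + p 2%nat * q 0%nat + p 3%nat * q 1%nat
  | 3%nat =>  p 0%nat * q 3%nat + p 1%nat * q 2%nat - p 2%nat * q 1%nat + p 3%nat * q 0%nat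
  | _ => 0
  end.
Definition mul8 (p q : nat -> R) (k : nat) : R :=
  match k with
  | 0%nat =>  p 0%nat * q 0%nat - p 1%nat * q 1%nat - p 2%nat * q 2%nat - p 3%nat * q 3%nat - p 4%nat * q 4%nat - p 5%nat * q 5%nat - p 6%nat * q 6%nat - p 7%nat * q 7%nat
  | 1%nat =>  p 0%nat * q 1%nat + p 1%nat * q 0%nat + p 2%nat * q 3%nat - p 3%nat * q 2%nat + p 4%nat * q 5%nat - p 5%nat * q 4%nat - p 6%nat * q 7%nat + p 7%nat * q 6%nat
  | 2%nat =>  p 0%nat * q 2%nat - p 1%nat * q 3%nat + p 2%nat * q 0%nat + p 3%nat * q 1%nat + p 4%nat * q 6%nat + p 5%nat * q 7%nat - p 6%nat * q 4%nat - p 7%nat * q 5%nat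
  | 3%nat =>  p 0%nat * q 3%nat + p 1%nat * q 2%nat - p 2%nat * q 1%nat + p 3%nat * q 0%nat + p 4%nat * q 7%nat - p 5%nat * q 6%nat + p 6%nat * q 5%nat - p 7%nat * q 4%nat
  | 4%nat =>  p 0%nat * q 4%nat - p 1%nat * q 5%nat - p 2%nat * q 6%nat - p 3%nat * q 7%nat + p 4%nat * q 0%nat + p 5%nat * q 1%nat + p 6%nat * q 2%nat + p 7%nat * q 3%nat
  | 5%nat =>  p 0%nat * q 5%nat + p 1%nat * q 4%nat - p 2%nat * q 7%nat + p 3%nat * q 6%nat - p 4%nat * q 1%nat + p 5%nat * q 0%nat - p 6%nat * q 3%nat + p 7%nat * q 2%nat
  | 6%nat =>  p 0%nat * q 6%nat + p 1%nat * q 7%nat + p 2%nat * q 4%nat - p 3%nat * q 5%nat - p 4%nat * q 2%nat + p 5%nat * q 3%nat + p 6%nat * q 0%nat - p 7%nat * q 1%nat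
  | 7%nat =>  p 0%nat * q 7%nat - p 1%nat * q 6%nat + p 2%nat * q 5%nat + p 3%nat * q 4%nat - p 4%nat * q 3%nat - p 5%nat * q 2%nat + p 6%nat * q 1%nat + p 7%nat * q 0%nat
  | _ => 0
  end.

Lemma compo4 : compo 4 mul4.
Proof.
  split.
  - lia.
  - intros q q' y k Hq. destruct k as [|[|[|[|k]]]]; simpl; repeat (rewrite Hq by lia); reflexivity.
  - intros a b q q' y k. destruct k as [|[|[|[|k]]]]; simpl; ring.
  - intros p c k. unfold ev. destruct k as [|[|[|[|k]]]]; simpl; ring.
  - intros p q. unfold normsq. simpl. ring.
  - intros k Hk. unfold ev. destruct k as [|[|[|[|k]]]]; simpl; try ring; lia.
Qed.

Lemma compo8 : compo 8 mul8.
Proof.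
  split.
  - lia.
  - intros q q' y k Hq. destruct k as [|[|[|[|[|[|[|[|k]]]]]]]]; simpl; repeat (rewrite Hq by lia); reflexivity.
  - intros a b q q' y k. destruct k as [|[|[|[|[|[|[|[|k]]]]]]]]; simpl; ring.
  - intros p c k. unfold ev. destruct k as [|[|[|[|[|[|[|[|k]]]]]]]]; simpl; ring.
  - intros p q. unfold normsq. simpl. ring.
  - intros k Hk. unfold ev. destruct k as [|[|[|[|[|[|[|[|k]]]]]]]]; simpl; try ring; lia.
Qed.
Lemma le_eps (a b : R) : (forall eps, 0 < eps -> a <= b + eps) -> a <= b.
Proof.
  intro H. apply Rnot_lt_le. intro Hlt.
  specialize (H ((a - b)/2) ltac:(lra)). lra.
Qed.

Lemma eps_zero (a K : R) : 0 <= K -> (forall eps, 0 < eps -> Rabs a <= K * eps) -> a = 0.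
Proof.
  intros HK H. destruct (Req_dec a 0) as [|Ha]; auto. exfalso.
  assert (Hp : 0 < Rabs a) by (apply Rabs_pos_lt; auto).
  specialize (H (Rabs a / (2 * (K + 1))) ltac:(apply Rdiv_lt_0_compat; lra)).
  assert (K * (Rabs a / (2 * (K + 1))) < Rabs a).
  { unfold Rdiv. apply (Rmult_lt_reg_r (2 * (K + 1))); [lra|].
    rewrite !Rmult_assoc, Rinv_l by lra. nra. }
  lra.
Qed.

Lemma abs_le1 (a : R) : a ^ 2 <= 1 -> Rabs a <= 1.
Proof. intro H. apply Rabs_le. split; nra. Qed.

Lemma lsum_sq_close {A} (u v : A -> R) (l : list A) (eps : R) :
  (forall a, In a l -> Rabs (u a) <= 1 /\ Rabs (v a) <= 1 /\ Rabs (u a - v a) <= eps) ->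
  Rabs (lsum (map (fun a => u a ^ 2) l) - lsum (map (fun a => v a ^ 2) l)) <= 2 * INR (length l) * eps.
Proof.
  intro H.
  replace (lsum (map (fun a => u a ^ 2) l) - lsum (map (fun a => v a ^ 2) l))
    with (lsum (map (fun a => (u a - v a) * (u a + v a)) l)).
  - eapply Rle_trans; [apply lsum_abs|].
    replace (2 * INR (length l) * eps) with (INR (length l) * (2 * eps)) by ring.
    rewrite <- lsum_const. apply lsum_le. intros a Ha. destruct (H a Ha) as [H1 [H2 H3]].
    rewrite Rabs_mult. assert (Rabs (u a + v a) <= 2) by (eapply Rle_trans; [apply Rabs_triang| lra]).
    assert (0 <= Rabs (u a - v a)) by apply Rabs_pos.
    assert (0 <= Rabs (u a + v a)) by apply Rabs_pos. nra.
  - rewrite (lsum_ext _ (fun a => u a ^ 2 + (-1) * v a ^ 2)) by (intros; ring).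
    rewrite lsum_plus, lsum_scal. ring.
Qed.

Fixpoint lpos {T} (dec : forall a b : T, {a = b} + {a <> b}) (a : T) (l : list T) : nat :=
  match l with
  | [] => 0%nat
  | h :: t => if dec a h then 0%nat else S (lpos dec a t)
  end.

Lemma pos_lt {T} dec (a : T) l : In a l -> (lpos dec a l < length l)%nat.
Proof.
  induction l as [|h t IH]; simpl; intros Ha; [destruct Ha|].
  destruct (dec a h); [lia|]. destruct Ha as [->|Ha]; [contradiction|]. specialize (IH Ha). lia.
Qed.

Lemma nth_pos {T} dec (a : T) l d : In a l -> nth (lpos dec a l) l d = a.
Proof.
  induction l as [|h t IH]; simpl; intros Ha; [destruct Ha|].
  destruct (dec a h) as [->|Hne]; [reflexivity|]. destruct Ha as [->|Ha]; [contradiction|]. auto.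
Qed.

Definition pair_dec : forall a b : nat * nat, {a = b} + {a <> b}.
Proof. decide equality; apply Nat.eq_dec. Defined.

Definition ldec : forall a b : list nat, {a = b} + {a <> b} := list_eq_dec Nat.eq_dec.

Lemma unit_coord n d x j i : unit_vecs n d x -> (j < d)%nat -> (i < n)%nat -> Rabs (x j i) <= 1.
Proof.
  intros Hx Hj Hi. pose proof (proj1 (unit_vecs_iff _ _ _) Hx j Hj) as Hn.
  apply abs_le1. rewrite <- Hn. unfold normsq.
  apply (term_le_lsum (fun i => x j i ^ 2)); [intros; apply pow2_ge_0| apply in_seq; lia].
Qed.

Lemma prodx_bound n d x : (forall j i, (j < d)%nat -> (i < n)%nat -> Rabs (x j i) <= 1) ->
  forall idx j, (j + length idx <= d)%nat -> (forall a, In a idx -> (a < n)%nat) -> Rabs (prodx x j idx) <= 1.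
Proof.
  intros Hx. induction idx as [|i r IH]; intros j Hj Ha; simpl.
  - rewrite Rabs_R1. lra.
  - rewrite Rabs_mult. simpl in Hj.
    assert (H1 : Rabs (x j i) <= 1) by (apply Hx; [lia| apply Ha; simpl; auto]).
    assert (H2 : Rabs (prodx x (S j) r) <= 1) by (apply IH; [lia| intros; apply Ha; simpl; auto]).
    assert (0 <= Rabs (x j i)) by apply Rabs_pos. assert (0 <= Rabs (prodx x (S j) r)) by apply Rabs_pos. nra.
Qed.

Lemma prodx_close n d x x' delta :
  (forall j i, (j < d)%nat -> (i < n)%nat -> Rabs (x j i) <= 1 /\ Rabs (x' j i) <= 1 /\ Rabs (x j i - x' j i) <= delta) ->
  forall idx j, (j + length idx <= d)%nat -> (forall a, In a idx -> (a < n)%nat) ->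
  Rabs (prodx x j idx - prodx x' j idx) <= INR (length idx) * delta.
Proof.
  intros Hx. induction idx as [|i r IH]; intros j Hj Ha; cbn [prodx length] in *.
  - replace (1 - 1) with 0 by ring. rewrite Rabs_R0. simpl. lra.
  - simpl in Hj.
    destruct (Hx j i ltac:(lia) ltac:(apply Ha; simpl; auto)) as [H1 [H2 H3]].
    assert (H4 : Rabs (prodx x (S j) r) <= 1).
    { apply (prodx_bound n d); [intros; apply Hx; auto| lia| intros; apply Ha; simpl; auto]. }
    assert (H5 := IH (S j) ltac:(lia) ltac:(intros; apply Ha; simpl; auto)).
    replace (x j i * prodx x (S j) r - x' j i * prodx x' (S j) r)
      with ((x j i - x' j i) * prodx x (S j) r + x' j i * (prodx x (S j) r - prodx x' (S j) r)) by ring.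
    eapply Rle_trans; [apply Rabs_triang|]. rewrite !Rabs_mult.
    rewrite S_INR.
    assert (0 <= delta) by (eapply Rle_trans; [apply Rabs_pos| exact H3]).
    assert (0 <= Rabs (x j i - x' j i)) by apply Rabs_pos.
    assert (0 <= Rabs (x' j i)) by apply Rabs_pos.
    assert (0 <= Rabs (prodx x (S j) r - prodx x' (S j) r)) by apply Rabs_pos.
    assert (0 <= Rabs (prodx x (S j) r)) by apply Rabs_pos.
    nra.
Qed.

Lemma prodx_ext x x' : forall idx j,
  (forall t i, (t < length idx)%nat -> In i idx -> x (j + t)%nat i = x' (j + t)%nat i) -> prodx x j idx = prodx x' j idx.
Proof.
  induction idx as [|i r IH]; intros j H; simpl; [reflexivity|].
  f_equal.
  - specialize (H 0%nat i ltac:(simpl; lia) ltac:(simpl; auto)). rewrite Nat.add_0_r in H. exact H.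
  - apply IH. intros t i' Ht Hi'. replace (S j + t)%nat with (j + S t)%nat by lia. apply H; simpl; auto. lia.
Qed.

Lemma mform_ext_x n d A x x' : (forall j i, (j < d)%nat -> (i < n)%nat -> x j i = x' j i) -> mform n d A x = mform n d A x'.
Proof.
  intro H. unfold mform. apply lsum_ext. intros idx Hidx. apply In_indices in Hidx. destruct Hidx as [Hl Ha].
  f_equal. apply prodx_ext. intros t i Ht Hi. apply H; auto. lia.
Qed.

Lemma mform_diff n d A B x : unit_vecs n d x ->
  Rabs (mform n d A x - mform n d B x) <= lsum (map (fun idx => Rabs (A idx - B idx)) (indices n d)).
Proof.
  intro Hx.
  replace (mform n d A x - mform n d B x) with (lsum (map (fun idx => (A idx - B idx) * prodx x 0 idx) (indices n d))).
  - eapply Rle_trans; [apply lsum_abs|]. apply lsum_le. intros idx Hidx.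
    apply In_indices in Hidx. destruct Hidx as [Hl Ha].
    rewrite Rabs_mult.
    assert (Rabs (prodx x 0 idx) <= 1).
    { apply (prodx_bound n d); [intros; apply (unit_coord n d); auto| simpl; lia| auto]. }
    assert (0 <= Rabs (A idx - B idx)) by apply Rabs_pos. nra.
  - unfold mform. rewrite (lsum_ext _ (fun idx => A idx * prodx x 0 idx + (-1) * (B idx * prodx x 0 idx))) by (intros; ring).
    rewrite lsum_plus, lsum_scal. ring.
Qed.

Lemma spectral_unique n d A s1 s2 : is_spectral_norm n d A s1 -> is_spectral_norm n d A s2 -> s1 = s2.
Proof.
  intros [[x1 [Hx1 E1]] H1] [[x2 [Hx2 E2]] H2].
  apply Rle_antisym; [rewrite <- E1; auto| rewrite <- E2; auto].
Qed.

Lemma spectral_lip n d A B sA sB : is_spectral_norm n d A sA -> is_spectral_norm n d B sB ->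
  Rabs (sA - sB) <= lsum (map (fun idx => Rabs (A idx - B idx)) (indices n d)).
Proof.
  intros [[xA [HxA EA]] HA] [[xB [HxB EB]] HB].
  set (L := lsum (map (fun idx => Rabs (A idx - B idx)) (indices n d))).
  assert (D1 := mform_diff n d A B xA HxA). assert (D2 := mform_diff n d A B xB HxB). fold L in D1, D2.
  assert (HB' := HB xA HxA). assert (HA' := HA xB HxB).
  assert (a1 := Rle_abs (mform n d A xA - mform n d B xA)).
  assert (a2 := Rle_abs (- (mform n d A xB - mform n d B xB))). rewrite Rabs_Ropp in a2.
  apply Rabs_le. split; lra.
Qed.

Lemma evt_max (N : nat) (P : (nat -> R) -> Prop) (f : (nat -> R) -> R) (B : R) :
  (exists y, P y) ->
  (forall y, P y -> forall k, (k < N)%nat -> Rabs (y k) <= B) ->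
  (forall y, (forall eps, 0 < eps -> exists z, P z /\ forall k, (k < N)%nat -> Rabs (y k - z k) < eps) -> P y) ->
  (forall y, P y -> forall eps, 0 < eps -> exists delta, 0 < delta /\
      forall z, P z -> (forall k, (k < N)%nat -> Rabs (y k - z k) < delta) -> Rabs (f y - f z) < eps) ->
  exists y, P y /\ forall z, P z -> f z <= f y.
Proof.
  intros H1 H2 H3 H4.
  destruct (MC.evt_min N P (fun y => - f y) B H1 H2 H3) as [y [Py Hy]].
  - intros y Py eps Heps. destruct (H4 y Py eps Heps) as [del [Hdel Hz]].
    exists del. split; auto. intros z Pz Hk. specialize (Hz z Pz Hk).
    replace (- f y - - f z) with (- (f y - f z)) by ring. rewrite Rabs_Ropp. auto.
  - exists y. split; auto. intros z Pz. specialize (Hy z Pz). lra.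
Qed.

Section Exist.
Variables (n d : nat).
Hypothesis Hn : (1 <= n)%nat.

Let Lx := list_prod (seq 0 d) (seq 0 n).
Let Nx := length Lx.
Let decx (y : nat -> R) : vecs := fun j i => y (lpos pair_dec (j, i) Lx).
Let encx (x : vecs) : nat -> R := fun k => x (fst (nth k Lx (0%nat, 0%nat))) (snd (nth k Lx (0%nat, 0%nat))).

Lemma inLx j i : (j < d)%nat -> (i < n)%nat -> In (j, i) Lx.
Proof. intros. apply in_prod; apply in_seq; lia. Qed.

Lemma decx_encx x j i : (j < d)%nat -> (i < n)%nat -> decx (encx x) j i = x j i.
Proof. intros. unfold decx, encx. rewrite nth_pos by (apply inLx; auto). reflexivity. Qed.

Lemma nth_Lx k : (k < Nx)%nat -> (fst (nth k Lx (0%nat,0%nat)) < d)%nat /\ (snd (nth k Lx (0%nat,0%nat)) < n)%nat.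
Proof.
  intro Hk. assert (Hin : In (nth k Lx (0%nat,0%nat)) Lx) by (apply nth_In; auto).
  destruct (nth k Lx (0%nat,0%nat)) as [j i]. apply in_prod_iff in Hin. destruct Hin as [Hj Hi].
  apply in_seq in Hj. apply in_seq in Hi. simpl. lia.
Qed.

Lemma spectral_exists A : exists s, is_spectral_norm n d A s.
Proof.
  set (P := fun y : nat -> R => unit_vecs n d (decx y) /\ forall k, (k < Nx)%nat -> Rabs (y k) <= 1).
  assert (Penc : forall x, unit_vecs n d x -> P (encx x)).
  { intros x Hx. split.
    - apply unit_vecs_iff. intros j Hj. pose proof (proj1 (unit_vecs_iff _ _ _) Hx j Hj) as E.
      rewrite <- E. unfold normsq. apply lsum_ext. intros i Hi. apply in_seq in Hi. rewrite decx_encx by lia. reflexivity.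
    - intros k Hk. destruct (nth_Lx k Hk). unfold encx. apply (unit_coord n d); auto. }
  destruct (evt_max Nx P (fun y => mform n d A (decx y)) 1) as [y [Py Hy]].
  - exists (encx (fun _ => ev 0)). apply Penc. apply unit_vecs_iff. intros. apply normsq_ev. lia.
  - intros y Py. apply Py.
  - intros y Hy. split.
    + apply unit_vecs_iff. intros j Hj.
      assert (Hbox : forall k, (k < Nx)%nat -> Rabs (y k) <= 1).
      { intros k Hk. apply le_eps. intros eps Heps. destruct (Hy eps Heps) as [z [[_ Hz] Hyz]].
        specialize (Hz k Hk). specialize (Hyz k Hk).
        assert (Rabs (y k) <= Rabs (z k) + Rabs (y k - z k)).
        { replace (y k) with (z k + (y k - z k)) at 1 by ring. apply Rabs_triang. }
        lra. }
      assert (E : normsq n (decx y j) - 1 = 0).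
      { apply (eps_zero _ (2 * INR n)); [apply Rmult_le_pos; [lra| apply pos_INR]|].
        intros eps Heps. destruct (Hy eps Heps) as [z [[Hzu Hzb] Hyz]].
        rewrite <- (proj1 (unit_vecs_iff _ _ _) Hzu j Hj). unfold normsq.
        replace (2 * INR n * eps) with (2 * INR (length (seq 0 n)) * eps) by (rewrite length_seq; ring).
        apply lsum_sq_close. intros i Hi. apply in_seq in Hi.
        assert (Hp : (lpos pair_dec (j, i) Lx < Nx)%nat) by (apply pos_lt; apply inLx; lia).
        unfold decx. split; [apply Hbox; auto| split; [apply Hzb; auto|]].
        left. apply Hyz. auto. }
      lra.
    + intros k Hk. apply le_eps. intros eps Heps. destruct (Hy eps Heps) as [z [[_ Hz] Hyz]].
      specialize (Hz k Hk). specialize (Hyz k Hk).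
      assert (Rabs (y k) <= Rabs (z k) + Rabs (y k - z k)).
      { replace (y k) with (z k + (y k - z k)) at 1 by ring. apply Rabs_triang. }
      lra.
  - intros y Py eps Heps.
    set (SA := lsum (map (fun idx => Rabs (A idx)) (indices n d))).
    assert (HSA : 0 <= SA) by (apply lsum_nonneg; intros; apply Rabs_pos).
    set (del := eps / (1 + INR d * SA)).
    assert (Hden : 0 < 1 + INR d * SA) by (assert (0 <= INR d) by apply pos_INR; nra).
    assert (Hdel : 0 < del) by (apply Rdiv_lt_0_compat; lra).
    exists del. split; auto. intros z Pz Hyz.
    unfold mform.
    replace (lsum (map (fun idx => A idx * prodx (decx y) 0 idx) (indices n d)) -
             lsum (map (fun idx => A idx * prodx (decx z) 0 idx) (indices n d)))
      with (lsum (map (fun idx => A idx * (prodx (decx y) 0 idx - prodx (decx z) 0 idx)) (indices n d))).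
    + eapply Rle_lt_trans; [apply lsum_abs|].
      apply Rle_lt_trans with (lsum (map (fun idx => Rabs (A idx) * (INR d * del)) (indices n d))).
      * apply lsum_le. intros idx Hidx. rewrite Rabs_mult.
        apply Rmult_le_compat_l; [apply Rabs_pos|].
        apply In_indices in Hidx. destruct Hidx as [Hl Ha]. rewrite <- Hl.
        apply (prodx_close n d); [| simpl; lia| auto].
        intros j i Hj Hi. unfold decx.
        assert (Hp : (lpos pair_dec (j, i) Lx < Nx)%nat) by (apply pos_lt; apply inLx; lia).
        split; [apply Py; auto| split; [apply Pz; auto| left; apply Hyz; auto]].
      * rewrite (lsum_ext _ (fun idx => (INR d * del) * Rabs (A idx))) by (intros; ring).
        rewrite lsum_scal. fold SA. unfold del.
        replace (INR d * (eps / (1 + INR d * SA)) * SA) with (eps * (INR d * SA / (1 + INR d * SA))) by (field; lra).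
        assert (INR d * SA / (1 + INR d * SA) < 1).
        { apply (Rmult_lt_reg_r (1 + INR d * SA)); auto. unfold Rdiv. rewrite Rmult_assoc, Rinv_l by lra. lra. }
        nra.
    + rewrite (lsum_ext _ (fun idx => A idx * prodx (decx y) 0 idx + (-1) * (A idx * prodx (decx z) 0 idx))) by (intros; ring).
      rewrite lsum_plus, lsum_scal. ring.
  - exists (mform n d A (decx y)). split.
    + exists (decx y). split; [apply Py| reflexivity].
    + intros x Hx. rewrite (mform_ext_x n d A x (decx (encx x))).
      * apply Hy. apply Penc. auto.
      * intros j i Hj Hi. rewrite decx_encx; auto.
Qed.
End Exist.

Definition sigma (n d : nat) (A : tensor) : R := epsilon (inhabits 0) (fun s => is_spectral_norm n d A s).

Lemma sigma_spec n d A : (1 <= n)%nat -> is_spectral_norm n d A (sigma n d A).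
Proof. intro Hn. unfold sigma. apply epsilon_spec. apply spectral_exists. auto. Qed.

Lemma spectral_scale n d A s F : 0 < F -> is_spectral_norm n d A s ->
  forall B, (forall idx, In idx (indices n d) -> B idx = A idx / F) -> is_spectral_norm n d B (s / F).
Proof.
  intros HF [[x [Hx E]] Hmax] B HB.
  assert (Hm : forall y, mform n d B y = / F * mform n d A y).
  { intro y. unfold mform. rewrite <- lsum_scal. apply lsum_ext. intros idx Hidx. rewrite HB by auto. unfold Rdiv. ring. }
  split.
  - exists x. split; auto. rewrite Hm, E. unfold Rdiv. ring.
  - intros y Hy. rewrite Hm. unfold Rdiv. rewrite Rmult_comm. apply Rmult_le_compat_r.
    + left. apply Rinv_0_lt_compat. auto.
    + auto.
Qed.

Lemma perm_indices n d idx idx' : In idx (indices n d) -> Permutation idx idx' -> In idx' (indices n d).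
Proof.
  intros H Hp. apply In_indices in H. apply In_indices. destruct H as [Hl Ha]. split.
  - rewrite <- (Permutation_length Hp). auto.
  - intros a Ha'. apply Ha. apply Permutation_in with idx'; auto. apply Permutation_sym; auto.
Qed.

Section SymMin.
Variables (n d : nat).
Hypothesis Hn : (1 <= n)%nat.

Let L := indices n d.
Let N := length L.
Let decT (y : nat -> R) : tensor := fun idx => y (lpos ldec idx L).

Lemma N_pos : (1 <= N)%nat.
Proof.
  assert (Hin : In (repeat 0%nat d) L).
  { apply In_indices. split; [apply repeat_length|]. intros a Ha. apply repeat_spec in Ha. lia. }
  unfold N. destruct L; [destruct Hin| simpl; lia].
Qed.

Lemma sym_min : exists r, is_approx_ratio is_symmetric n d r.
Proof.
  set (P := fun y : nat -> R => is_symmetric n d (decT y) /\ sumsq n d (decT y) = 1 /\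
                                forall k, (k < N)%nat -> Rabs (y k) <= 1).
  assert (HN := N_pos).
  assert (HNr : 1 <= INR N) by (apply (le_INR 1); lia).
  assert (Hbox : forall y, (forall eps, 0 < eps -> exists z, P z /\ forall k, (k < N)%nat -> Rabs (y k - z k) < eps) ->
                 forall k, (k < N)%nat -> Rabs (y k) <= 1).
  { intros y Hy k Hk. apply le_eps. intros eps Heps. destruct (Hy eps Heps) as [z [[_ [_ Hz]] Hyz]].
    specialize (Hz k Hk). specialize (Hyz k Hk).
    assert (Rabs (y k) <= Rabs (z k) + Rabs (y k - z k)).
    { replace (y k) with (z k + (y k - z k)) at 1 by ring. apply Rabs_triang. }
    lra. }
  destruct (MC.evt_min N P (fun y => sigma n d (decT y)) 1) as [y [Py Hy]].
  - set (c := / sqrt (INR N)).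
    assert (Hs : 1 <= sqrt (INR N)) by (rewrite <- sqrt_1; apply sqrt_le_1_alt; lra).
    assert (Hc : 0 < c) by (apply Rinv_0_lt_compat; lra).
    exists (fun _ => c). split; [|split].
    + intros idx idx' _ _. reflexivity.
    + unfold sumsq, decT. cbv beta. rewrite lsum_const. fold L N. unfold c.
      rewrite <- Rinv_pow by lra. rewrite <- Rsqr_pow2, Rsqr_sqrt by lra. field. lra.
    + intros k _. rewrite Rabs_right by lra. unfold c.
      rewrite <- Rinv_1. apply Rinv_le_contravar; lra.
  - intros y Py. apply Py.
  - intros y Hy. split; [|split].
    + intros idx idx' Hidx Hp.
      assert (Hidx' : In idx' L) by (apply (perm_indices n d idx); auto).
      unfold decT.
      assert (H1 : (lpos ldec idx L < N)%nat) by (apply pos_lt; auto).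
      assert (H2 : (lpos ldec idx' L < N)%nat) by (apply pos_lt; auto).
      apply Rminus_diag_uniq. apply (eps_zero _ 2); [lra|]. intros eps Heps.
      destruct (Hy eps Heps) as [z [[Hzs _] Hyz]].
      assert (Ez := Hzs idx idx' Hidx Hp). unfold decT in Ez.
      assert (a1 := Hyz _ H1). assert (a2 := Hyz _ H2).
      replace (y (lpos ldec idx L) - y (lpos ldec idx' L))
        with ((y (lpos ldec idx L) - z (lpos ldec idx L)) - (y (lpos ldec idx' L) - z (lpos ldec idx' L)))
        by (rewrite Ez; ring).
      eapply Rle_trans; [apply Rabs_triang|]. rewrite Rabs_Ropp. lra.
    + apply Rminus_diag_uniq. apply (eps_zero _ (2 * INR N)); [lra|]. intros eps Heps.
      destruct (Hy eps Heps) as [z [[_ [Hz1 Hzb]] Hyz]].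
      rewrite <- Hz1. unfold sumsq. unfold N. apply lsum_sq_close. intros idx Hidx.
      assert (H1 : (lpos ldec idx L < N)%nat) by (apply pos_lt; auto).
      unfold decT. split; [apply (Hbox y Hy); auto| split; [apply Hzb; auto| left; apply Hyz; auto]].
    + apply Hbox. auto.
  - intros y Py eps Heps.
    set (del := eps / (INR N + 1)).
    assert (Hdel : 0 < del) by (apply Rdiv_lt_0_compat; lra).
    exists del. split; auto. intros z Pz Hyz.
    eapply Rle_lt_trans; [apply spectral_lip; apply sigma_spec; auto|].
    apply Rle_lt_trans with (lsum (map (fun _ => del) (indices n d))).
    + apply lsum_le. intros idx Hidx. left. apply Hyz. apply pos_lt. auto.
    + rewrite lsum_const. fold L N. unfold del.
      apply (Rmult_lt_reg_r (INR N + 1)); [lra|].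
      replace (INR N * (eps / (INR N + 1)) * (INR N + 1)) with (INR N * eps) by (field; lra). nra.
  - destruct Py as [Hsym [Hss Hbx]].
    exists (sigma n d (decT y)). split.
    + exists (decT y), (sigma n d (decT y)). split; [auto|]. split.
      * apply sumsq_pos_nonzero. lra.
      * split; [apply sigma_spec; auto|]. rewrite frob_sumsq, Hss, sqrt_1. unfold Rdiv. rewrite Rinv_1. ring.
    + intros A s HsA Hnz Hspec.
      assert (Hpos := nonzero_sumsq_pos _ _ _ Hnz).
      set (F := frob n d A).
      assert (HF : 0 < F) by (apply sqrt_lt_R0; auto).
      assert (HFF : F * F = sumsq n d A) by (apply sqrt_sqrt; lra).
      set (z := fun k => A (nth k L []) / F).
      assert (Ez : forall idx, In idx (indices n d) -> decT z idx = A idx / F).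
      { intros idx Hidx. unfold decT, z. rewrite nth_pos; auto. }
      assert (Pz : P z).
      { split; [|split].
        - intros idx idx' Hidx Hp. rewrite !Ez; auto; [|apply (perm_indices n d idx); auto].
          f_equal. apply HsA; auto.
        - unfold sumsq. rewrite (lsum_ext _ (fun idx => / (F * F) * A idx ^ 2)).
          + rewrite lsum_scal. fold (sumsq n d A). rewrite HFF. field. lra.
          + intros idx Hidx. rewrite Ez by auto. field. lra.
        - intros k Hk. unfold z. apply abs_le1.
          assert (Hin : In (nth k L []) L) by (apply nth_In; auto).
          assert (A (nth k L []) ^ 2 <= sumsq n d A).
          { apply (term_le_lsum (fun idx => A idx ^ 2)); auto. intros; apply pow2_ge_0. }
          replace ((A (nth k L []) / F) ^ 2) with (A (nth k L []) ^ 2 / (F * F)) by (field; lra).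
          rewrite HFF. apply (Rmult_le_reg_r (sumsq n d A)); auto. unfold Rdiv.
          rewrite Rmult_assoc, Rinv_l by lra. lra. }
      specialize (Hy z Pz).
      assert (Eσ : sigma n d (decT z) = s / F).
      { apply (spectral_unique n d (decT z)); [apply sigma_spec; auto|].
        apply (spectral_scale n d A s F HF Hspec). auto. }
      rewrite Eσ in Hy. exact Hy.
Qed.
End SymMin.

Lemma main_n n mul : compo n mul -> (3 <= n)%nat -> forall m,
  is_approx_ratio full_space n (S (S (S m))) (/ sqrt (INR n ^ S (S m))) /\
  exists r, is_approx_ratio is_symmetric n (S (S (S m))) r /\ / sqrt (INR n ^ S (S m)) < r.
Proof.
  intros Hc Hn m. split; [apply (full_ratio n mul Hc)|].
  destruct (sym_min n (S (S (S m))) ltac:(lia)) as [r Hr].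
  exists r. split; auto.
  destruct Hr as [[A [s [HsA [Hnz [Hspec Er]]]]] _].
  assert (Hlt := sym_strict n m A s Hn HsA Hnz Hspec).
  destruct (spectral_lower n (S (S m)) A s ltac:(lia) Hspec) as [_ Hs0].
  assert (Hpos := nonzero_sumsq_pos _ _ _ Hnz).
  assert (Hpow : 0 < INR n ^ S (S m)) by (apply pow_lt; apply lt_0_INR; lia).
  rewrite <- Er, frob_sumsq.
  assert (Hsq : sqrt (sumsq n (S (S (S m))) A) < sqrt (INR n ^ S (S m)) * s).
  { replace (sqrt (INR n ^ S (S m)) * s) with (sqrt (INR n ^ S (S m) * s ^ 2)).
    - apply sqrt_lt_1_alt; split; [lra| auto].
    - rewrite sqrt_mult_alt by lra. rewrite sqrt_pow2 by lra. reflexivity. }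
  assert (0 < sqrt (INR n ^ S (S m))) by (apply sqrt_lt_R0; auto).
  assert (0 < sqrt (sumsq n (S (S (S m))) A)) by (apply sqrt_lt_R0; auto).
  apply (Rmult_lt_reg_r (sqrt (sumsq n (S (S (S m))) A))); auto.
  unfold Rdiv. rewrite Rmult_assoc, Rinv_l by lra. rewrite Rmult_1_r.
  apply (Rmult_lt_reg_l (sqrt (INR n ^ S (S m)))); auto.
  rewrite <- Rmult_assoc, Rinv_r by lra. lra.
Qed.

Theorem corollary1p7 (d : nat) (hd : (3 <= d)%nat) :
  (is_approx_ratio full_space 4 d (/ sqrt (4 ^ (d - 1))) /\
   exists r, is_approx_ratio is_symmetric 4 d r /\ / sqrt (4 ^ (d - 1)) < r) /\
  (is_approx_ratio full_space 8 d (/ sqrt (8 ^ (d - 1))) /\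
   exists r, is_approx_ratio is_symmetric 8 d r /\ / sqrt (8 ^ (d - 1)) < r).
Proof.
  destruct d as [|[|[|m]]]; try lia.
  replace (S (S (S m)) - 1)%nat with (S (S m)) by lia.
  replace (4 : R) with (INR 4) by (simpl; ring).
  replace (8 : R) with (INR 8) by (simpl; ring).
  split; [apply (main_n 4 mul4 compo4)| apply (main_n 8 mul8 compo8)]; lia.
Qed.
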